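(* Let $M$ be a universal left-c.e. semi-measure and let $\mathcal S$ be the collection of all left-c.e. semi-measures. Then $\mathsf{MLR}_M=\bigcup_{\rho\in\mathcal S}\mathsf{MLR}_\rho$.
   Context: $2^{<\omega}$ is the set of finite binary strings, $\varepsilon$ the empty string, $[\![\sigma]\!]=\{X\in2^\omega:\sigma\preceq X\}$, $[\![S]\!]=\bigcup_{\sigma\in S}[\![\sigma]\!]$. A semi-measure is $\rho:2^{<\omega}\to[0,1]$ with $\rho(\varepsilon)=1$ and $\rho(\sigma)\ge\rho(\sigma0)+\rho(\sigma1)$; it is left-c.e. if its values are uniformly approximable from below by a computable, non-decreasing sequence of rationals. A left-c.e. semi-measure $M$ is universal if for every left-c.e. semi-measure $\rho$ there is $c\in\omega$ with $\rho(\sigma)\le c\cdot M(\sigma)$ for all $\sigma$. For $E\subseteq2^{<\omega}$, $\rho(E)=\sum_{\sigma\in E}\rho(\sigma)$. A $\rho$-Martin-Löf test is a uniformly c.e. sequence $(U_i)$ of subsets of $2^{<\omega}$ with $\rho(U_i)\le2^{-i}$; $X\in\mathsf{MLR}_\rho$ iff $X\notin\bigcap_i[\![U_i]\!]$ for every such test. *)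

(* Defs.v *)
From HB Require Import structures.
From mathcomp Require Import all_boot all_order all_algebra.
From mathcomp Require Import all_classical all_reals all_analysis.
Set Implicit Arguments. Unset Strict Implicit. Unset Printing Implicit Defensive.
Import Order.TTheory GRing.Theory Num.Theory.
Import numFieldNormedType.Exports.
Local Open Scope classical_set_scope.
Local Open Scope ring_scope.

Inductive prog : Type :=
| PZero : prog
| PSucc : prog
| PProj : nat -> prog
| PComp : prog -> seq prog -> prog
| PPrim : prog -> prog -> prog
| PMu   : prog -> prog.

Inductive peval : prog -> seq nat -> nat -> Prop :=
| ev_zero v : peval PZero v 0
| ev_succ x v : peval PSucc (x :: v) x.+1
| ev_proj i v : (i < size v)%N -> peval (PProj i) v (nth 0%N v i)
| ev_comp f gs v ws y :
    pevals gs v ws -> peval f ws y -> peval (PComp f gs) v y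
| ev_prim0 f g v y : peval f v y -> peval (PPrim f g) (0%N :: v) y
| ev_primS f g n v z y :
    peval (PPrim f g) (n :: v) z -> peval g (n :: z :: v) y ->
    peval (PPrim f g) (n.+1 :: v) y
| ev_mu f v n :
    peval f (n :: v) 0 ->
    (forall m, (m < n)%N -> exists k, peval f (m :: v) k.+1) ->
    peval (PMu f) v n
with pevals : seq prog -> seq nat -> seq nat -> Prop :=
| evs_nil v : pevals [::] v [::]
| evs_cons g gs v w ws :
    peval g v w -> pevals gs v ws -> pevals (g :: gs) v (w :: ws).

Definition computable2 (f : nat -> nat -> nat) : Prop :=
  exists p : prog, forall x y, peval p [:: x; y] (f x y).

(* bijective coding: [::] |-> 0, b :: s |-> 2 * code s + 1 + b *)
Fixpoint bcode (s : seq bool) : nat :=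
  match s with
  | [::] => 0%N
  | b :: s' => (bcode s').*2 + 1 + b
  end.

Definition prefix (sigma : seq bool) (X : nat -> bool) : Prop :=
  forall i, (i < size sigma)%N -> nth false sigma i = X i.

Section SemiMeasures.
Variable R : realType.

Definition semimeasure (rho : seq bool -> R) : Prop :=
  [/\ forall sigma, 0 <= rho sigma <= 1,
      rho [::] = 1 &
      forall sigma, rho (rcons sigma false) + rho (rcons sigma true) <= rho sigma].

Definition left_ce (rho : seq bool -> R) : Prop :=
  exists a b c : nat -> nat -> nat,
    [/\ computable2 a, computable2 b, computable2 c &
      forall sigma,
        let q := fun s : nat =>
          ((a (bcode sigma) s)%:R - (b (bcode sigma) s)%:R) /
          (c (bcode sigma) s).+1%:R : R in
        (forall s, q s <= q s.+1) /\ q @ \oo --> rho sigma].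

Definition left_ce_semimeasure (rho : seq bool -> R) : Prop :=
  semimeasure rho /\ left_ce rho.

Definition universal (M : seq bool -> R) : Prop :=
  left_ce_semimeasure M /\
  forall rho, left_ce_semimeasure rho ->
    exists c : nat, forall sigma, rho sigma <= c%:R * M sigma.

Definition unif_ce (U : nat -> set (seq bool)) : Prop :=
  exists p : prog, forall i sigma,
    U i sigma <-> exists y, peval p [:: i; bcode sigma] y.

Definition rho_of (rho : seq bool -> R) (E : set (seq bool)) : \bar R :=
  (\esum_(sigma in E) (rho sigma)%:E)%E.

Definition ML_test (rho : seq bool -> R) (U : nat -> set (seq bool)) : Prop :=
  unif_ce U /\ forall i, (rho_of rho (U i) <= ((2%:R : R) ^- i)%:E)%E.

Definition in_cyl (S : set (seq bool)) (X : nat -> bool) : Prop :=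
  exists2 sigma, S sigma & prefix sigma X.

Definition MLR (rho : seq bool -> R) : set (nat -> bool) :=
  [set X | forall U, ML_test rho U -> ~ (forall i, in_cyl (U i) X)].

End SemiMeasures.

(* Main.v *)
Require Import Defs.
From HB Require Import structures.
From mathcomp Require Import all_boot all_order all_algebra.
From mathcomp Require Import all_classical all_reals all_analysis.
Import Order.TTheory GRing.Theory Num.Theory.
Local Open Scope classical_set_scope.
Local Open Scope ring_scope.

Fixpoint addk (k : nat) : prog :=
  match k with 0 => PProj 0 | k'.+1 => PComp PSucc [:: addk k'] end.

Lemma addk_ok k i v : peval (addk k) (i :: v) (i + k)%N.
Proof.
elim: k => [|k IH] /=; first by rewrite addn0; by apply: (@ev_proj 0 (i :: v)).
rewrite addnS; apply: (ev_comp (ws := [:: (i + k)%N])).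
  by apply: evs_cons => //; exact: evs_nil.
exact: ev_succ.
Qed.

Lemma addk_det k i v w : peval (addk k) (i :: v) w -> w = (i + k)%N.
Proof.
elim: k w => [|k IH] w /= H.
  by inversion H; subst; rewrite addn0.
inversion H; subst.
inversion H2; subst. inversion H5; subst.
by rewrite (IH _ H3) addnS.
Qed.

Lemma esum_natmul (R : realType) (S : set (seq bool)) (f : seq bool -> R) (b : R) n :
  (forall s, 0 <= f s) -> (\esum_(s in S) (f s)%:E <= b%:E)%E ->
  (\esum_(s in S) (n%:R * f s)%:E <= (n%:R * b)%:E)%E.
Proof.
move=> f0 Hb; elim: n => [|n IH].
  rewrite mul0r; apply: (@le_trans _ _ (\esum_(s in S) 0)%E).
    by apply: le_esum => s _; rewrite mul0r.
  by rewrite esum1.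
rewrite (@eq_esum _ _ S _ (fun s => (f s)%:E + (n%:R * f s)%:E)%E); last first.
  by move=> s _; rewrite -EFinD mulrSr mulrDl mul1r addrC.
rewrite esumD; last 2 first.
- by move=> s _; rewrite lee_fin.
- by move=> s _; rewrite lee_fin mulr_ge0.
rewrite mulrSr mulrDl mul1r addrC EFinD.
exact: leeD.
Qed.

Theorem proposition5p2 (R : realType) (M : seq bool -> R) :
  universal M ->
  MLR M = \bigcup_(rho in [set rho : seq bool -> R | left_ce_semimeasure rho]) MLR rho.
Proof.
move=> [HM Huniv]; apply/seteqP; split => X.
  by move=> HX; exists M.
move=> [rho Hrho HX] U [[p Hp] HU] Hcov.
have [c Hc] := Huniv rho Hrho.
have [[M01 _ _] _] := HM.
have [[r01 _ _] _] := Hrho.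
apply: (HX (fun j => U (j + c)%N)); last by move=> i; exact: Hcov.
split.
  exists (PComp p [:: addk c; PProj 1]) => i sigma; rewrite Hp; split.
    move=> [y Hy]; exists y; apply: (ev_comp (ws := [:: (i + c)%N; bcode sigma])) => //.
    apply: evs_cons; first exact: addk_ok.
    apply: evs_cons; last exact: evs_nil.
    by apply: (@ev_proj 1 [:: i; bcode sigma]).
  move=> [y Hy]; exists y.
  inversion Hy as [| | |f gs v ws y' Hgs Hf| | | ]; subst.
  inversion Hgs as [|g gs' v' w ws' Hg Hgs']; subst.
  inversion Hgs' as [|g2 gs2 v2 w2 ws2 Hg2 Hgs2]; subst.
  inversion Hgs2; subst. inversion Hg2; subst.
  by rewrite -(addk_det _ _ _ _ Hg).
move=> i.
apply: (@le_trans _ _ (\esum_(s in U (i + c)%N) (c%:R * M s)%:E)%E).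
  by apply: le_esum => s _; rewrite lee_fin.
have M0 : forall s, 0 <= M s by move=> s; have /andP[] := M01 s.
apply: le_trans; first exact: (@esum_natmul _ _ M _ c M0 (HU (i + c)%N)).
rewrite lee_fin.
have h2 : (0 : R) < 2 ^+ c by rewrite exprn_gt0.
have hc : (c%:R : R) / 2 ^+ c <= 1.
  rewrite ler_pdivrMr // mul1r -natrX ler_nat; exact: ltnW (ltn_expl c (isT : 1 < 2)%N).
rewrite exprD invfM mulrA mulrC [X in X <= _](_ : _ = 2 ^- i * (c%:R / 2 ^+ c)); last first.
  by rewrite mulrCA [_ / 2 ^+ i]mulrC mulrCA.
rewrite -[X in _ <= X]mulr1; apply: ler_wpM2l => //.
Qed.
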